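(* Every subalgebra of a regular Lie algebra (finite-dimensional, over an infinite field $K$) is regular.
   Context: All algebras are finite-dimensional over an infinite field $K$. For $x\in L$ write $\chi_{\operatorname{ad} x}(t)=\det(t-\operatorname{ad}x)=\sum_{i}a_i(x)t^i$. The rank $\operatorname{rk}L$ is the minimal $r$ such that $a_r(x)\neq 0$ for some $x\in L$. An element $x$ is regular if $a_{\operatorname{rk}L}(x)\neq 0$. A Lie algebra is regular if each of its nonzero elements is regular. *)

(* Defs.v *)
From HB Require Import structures.
From mathcomp Require Import all_boot all_order all_algebra.
Set Implicit Arguments. Unset Strict Implicit. Unset Printing Implicit Defensive.
Import GRing.Theory.
Local Open Scope ring_scope.

Definition is_lie_bracket (K : fieldType) (vT : vectType K) (br : vT -> vT -> vT) :=
  [/\ forall (a : K) x y z, br (a *: x + y) z = a *: br x z + br y z,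
      forall (a : K) x y z, br z (a *: x + y) = a *: br z x + br z y,
      forall x, br x x = 0 &
      forall x y z, br x (br y z) + br y (br z x) + br z (br x y) = 0].

Definition is_subalgebra (K : fieldType) (vT : vectType K) (br : vT -> vT -> vT)
    (U : {vspace vT}) :=
  forall x y, x \in U -> y \in U -> br x y \in U.

Definition ad_mx (K : fieldType) (vT : vectType K) (br : vT -> vT -> vT)
    (U : {vspace vT}) (x : vT) : 'M[K]_(\dim U) :=
  \matrix_(i, j) coord (vbasis U) j (br x (vbasis U)`_i).

Definition ad_charpoly (K : fieldType) (vT : vectType K) (br : vT -> vT -> vT)
    (U : {vspace vT}) (x : vT) : {poly K} :=
  char_poly (ad_mx br U x).

Definition is_lie_rank (K : fieldType) (vT : vectType K) (br : vT -> vT -> vT)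
    (U : {vspace vT}) (r : nat) :=
  (exists2 x, x \in U & (ad_charpoly br U x)`_r != 0) /\
  (forall r', (r' < r)%N -> forall x, x \in U -> (ad_charpoly br U x)`_r' = 0).

Definition regular_elt (K : fieldType) (vT : vectType K) (br : vT -> vT -> vT)
    (U : {vspace vT}) (x : vT) :=
  exists r, is_lie_rank br U r /\ (ad_charpoly br U x)`_r != 0.

Definition regular_lie (K : fieldType) (vT : vectType K) (br : vT -> vT -> vT)
    (U : {vspace vT}) :=
  forall x, x \in U -> x != 0 -> regular_elt br U x.

Definition infinite_field (K : fieldType) := forall s : seq K, exists x, x \notin s.

(* Main.v *)
Require Import Defs.
From mathcomp Require Import all_boot all_order all_algebra.
From Stdlib Require Import Classical.
From mathcomp Require Import zify ring.
Set Implicit Arguments. Unset Strict Implicit. Unset Printing Implicit Defensive.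
Import GRing.Theory.
Local Open Scope ring_scope.

Section Aux.
Variable K : fieldType.

Lemma coefM_low (p q : {poly K}) a b :
  (forall i, (i < a)%N -> p`_i = 0) -> (forall j, (j < b)%N -> q`_j = 0) ->
  (p * q)`_(a + b) = p`_a * q`_b.
Proof.
move=> Hp Hq; rewrite coefM (bigD1 (@Ordinal (a+b).+1 a (leq_addr b a))) //= addKn.
rewrite big1 ?addr0 // => j /eqP Hj.
have [lt|ge] := ltnP j a; first by rewrite Hp // mul0r.
have gt : (a < j)%N by rewrite ltn_neqAle ge andbT; apply/eqP => E; apply: Hj; apply: val_inj.
rewrite Hq ?mulr0 //. have := ltn_ord j; rewrite ltnS => Hj2. lia.
Qed.

Lemma char_poly_block n1 n2 (M : 'M[K]_(n1 + n2)) : ursubmx M = 0 ->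
  char_poly M = char_poly (ulsubmx M) * char_poly (drsubmx M).
Proof.
move=> H0; rewrite -{1}(submxK M) H0 /char_poly /char_poly_mx map_block_mx.
rewrite (scalar_mx_block n1 n2) opp_block_mx add_block_mx.
have -> : (0 - map_mx polyC (0 : 'M[K]_(n1,n2))) = 0 by apply/matrixP => i j; rewrite !mxE subrr.
by rewrite det_lblock. Qed.

Lemma char_poly_sim k (P Q A B : 'M[K]_k) :
  P *m Q = 1%:M -> P *m A = B *m P -> char_poly B = char_poly A.
Proof.
move=> PQ PA.
have EB : B = P *m A *m Q by rewrite PA -mulmxA PQ mulmx1.
rewrite /char_poly /char_poly_mx EB !map_mxM.
have -> : 'X%:M - map_mx polyC P *m map_mx polyC A *m map_mx polyC Q =
   map_mx polyC P *m ('X%:M - map_mx polyC A) *m map_mx polyC Q.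
  rewrite mulmxBr mulmxBl; congr (_ - _).
  by rewrite mul_mx_scalar -scalemxAl -mul_mx_scalar -map_mxM PQ map_mx1 mul1mx.
by rewrite !det_mulmx mulrAC -det_mulmx -map_mxM PQ map_mx1 det1 mul1r.
Qed.

Lemma line_poly k (A C : 'M[K]_k) j :
  exists P : {poly K}, forall c, P.[c] = (char_poly (c *: C + A))`_j.
Proof.
pose M : 'M[{poly K}]_k := 'X *: map_mx polyC C + map_mx polyC A.
exists (char_poly M)`_j => c.
have -> : c *: C + A = map_mx (horner_eval c) M.
  by apply/matrixP => i l; rewrite !mxE horner_evalE hornerD hornerM hornerX !hornerC.
by rewrite -map_char_poly coef_map.
Qed.

Lemma poly_nonroot (p : {poly K}) : infinite_field K -> p != 0 ->
  exists c, p.[c] != 0.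
Proof.
move=> Hinf pn0.
have Hs : forall n, exists s : seq K, uniq s /\ size s = n.
  elim=> [|n [s [us ss]]]; first by exists [::].
  have [x xs] := Hinf s; exists (x :: s); by rewrite /= xs us ss.
apply: NNPP => Hn.
have [s [us ss]] := Hs (size p).
have : all (root p) s.
  apply/allP => x _; apply/eqP; apply: NNPP => Hx; apply: Hn; exists x; exact/eqP.
move=> al; have := max_poly_roots pn0 al us; by rewrite ss ltnn.
Qed.

Lemma classical_min (P : nat -> Prop) n : P n ->
  exists m, P m /\ forall k, (k < m)%N -> ~ P k.
Proof.
elim: n {-2}n (leqnn n) => [|N IH] n Hn Pn.
  exists n; split => // k; rewrite leqn0 in Hn; by rewrite (eqP Hn).
case: (classic (exists k, (k < n)%N /\ P k)) => [[k [kn Pk]]|H].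
  apply: (IH k) => //; lia.
exists n; split => // k kn Pk; apply: H; by exists k.
Qed.

End Aux.

Section Lie.
Variables (K : fieldType) (vT : vectType K) (br : vT -> vT -> vT).
Hypothesis Hbr : is_lie_bracket br.

Definition matB k (X : k.-tuple vT) x : 'M[K]_k :=
  \matrix_(i, j) coord X j (br x X`_i).

Lemma br0r z : br z 0 = 0.
Proof.
case: Hbr => _ H2 _ _; have := H2 1 0 0 z; rewrite addr0 !scale1r => E.
by apply: (addrI (br z 0)); rewrite addr0 -E.
Qed.

Lemma br0l z : br 0 z = 0.
Proof.
case: Hbr => H1 _ _ _; have := H1 1 0 0 z; rewrite addr0 !scale1r => E.
by apply: (addrI (br 0 z)); rewrite addr0 -E.
Qed.

Lemma br_sum2 z n (a : 'I_n -> K) (F : 'I_n -> vT) :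
  br z (\sum_(i < n) a i *: F i) = \sum_(i < n) a i *: br z (F i).
Proof.
case: Hbr => _ H2 _ _.
elim: (index_enum _) => [|i s IH]; first by rewrite !big_nil br0r.
by rewrite !big_cons H2 IH.
Qed.

Lemma matB_lin k (X : k.-tuple vT) a x y :
  matB X (a *: x + y) = a *: matB X x + matB X y.
Proof.
case: Hbr => H1 _ _ _.
by apply/matrixP => i j; rewrite !mxE H1 linearD linearZ.
Qed.

Lemma matB_sim k k' (X : k.-tuple vT) (Y : k'.-tuple vT) x :
  basis_of fullv X -> basis_of fullv Y ->
  char_poly (matB X x) = char_poly (matB Y x).
Proof.
move=> HX HY.
have e : k' = k by rewrite -(size_basis HX) (size_basis HY).
subst k'.
have spX : forall v, v = \sum_i coord X i v *: X`_i.
  move=> v; apply: coord_span; by rewrite (span_basis HX) memvf.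
have spY : forall v, v = \sum_i coord Y i v *: Y`_i.
  move=> v; apply: coord_span; by rewrite (span_basis HY) memvf.
pose P : 'M[K]_k := \matrix_(i, j) coord Y j X`_i.
pose Q : 'M[K]_k := \matrix_(i, j) coord X j Y`_i.
apply: (@char_poly_sim _ _ P Q).
  apply/matrixP => i j; rewrite !mxE.
  transitivity (coord X j (\sum_l coord Y l X`_i *: Y`_l)).
    rewrite linear_sum; apply: eq_bigr => l _; by rewrite linearZ !mxE.
  by rewrite -spY coord_free ?(basis_free HX).
apply/matrixP => i j; rewrite !mxE.
transitivity (coord Y j (br x X`_i)).
  rewrite {1}(spY X`_i) br_sum2 linear_sum; apply: eq_bigr => l _.
  by rewrite linearZ !mxE.
rewrite {1}(spX (br x X`_i)) linear_sum; apply: eq_bigr => l _.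
by rewrite linearZ /matB !mxE.
Qed.


Section Block.
Variable U : {vspace vT}.
Hypothesis HU : is_subalgebra br U.

Definition Bc : (\dim U + \dim U^C).-tuple vT := [tuple of vbasis U ++ vbasis U^C].

Lemma Bc_basis : basis_of fullv Bc.
Proof.
rewrite -(addv_complf U); apply: cat_basis; last exact: vbasisP.
  by apply/directv_addP; exact: capv_compl.
exact: vbasisP.
Qed.

Lemma Bc_l (j : 'I_(\dim U)) : Bc`_(lshift (\dim U^C) j) = (vbasis U)`_j.
Proof. by rewrite /= nth_cat size_tuple ltn_ord. Qed.

Lemma split_l m n (j : 'I_m) : split (lshift n j) = inl j.
Proof. exact: (unsplitK (inl _)). Qed.
Lemma split_r m n (j : 'I_n) : split (rshift m j) = inr j.
Proof. exact: (unsplitK (inr _)). Qed.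

Lemma coordBc v : v \in U -> forall l,
  coord Bc l v = match split l with inl j => coord (vbasis U) j v | inr _ => 0 end.
Proof.
move=> vU l.
pose a (l : 'I_(\dim U + \dim U^C)) :=
  match split l with inl j => coord (vbasis U) j v | inr _ => 0 end.
have Ev : v = \sum_l a l *: Bc`_l.
  rewrite big_split_ord /= [X in _ + X]big1 ?addr0.
    rewrite {1}(coord_vbasis vU); apply: eq_bigr => j _.
    by rewrite /a split_l -Bc_l.
  by move=> j _; rewrite /a split_r scale0r.
by rewrite {1}Ev coord_sum_free ?(basis_free Bc_basis).
Qed.

Lemma ul_Bc x : x \in U -> ulsubmx (matB Bc x) = matB (vbasis U) x.
Proof.
move=> xU; apply/matrixP => i j; rewrite /matB !mxE Bc_l coordBc.
  by rewrite split_l.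
by apply: HU => //; apply: vbasis_mem; apply: mem_nth; rewrite size_tuple.
Qed.

Lemma ur_Bc x : x \in U -> ursubmx (matB Bc x) = 0.
Proof.
move=> xU; apply/matrixP => i j; rewrite /matB !mxE Bc_l coordBc.
  by rewrite split_r.
by apply: HU => //; apply: vbasis_mem; apply: mem_nth; rewrite size_tuple.
Qed.

End Block.
End Lie.

Theorem lemma2 (K : fieldType) (vT : vectType K) (br : vT -> vT -> vT) :
  infinite_field K ->
  is_lie_bracket br ->
  regular_lie br fullv ->
  forall U : {vspace vT}, is_subalgebra br U -> regular_lie br U.
Proof.
move=> Hinf Hbr Hreg U HU x1 x1U x1n0.
have H0 : (ad_charpoly br U 0)`_(\dim U) != 0.
  have := char_poly_monic (ad_mx br U 0).
  by rewrite monicE /lead_coef size_char_poly => /eqP ->; rewrite oner_neq0.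
have [s [[x0 x0U Hx0] Hmin]] := @classical_min
  (fun k => exists2 x, x \in U & (ad_charpoly br U x)`_k != 0) (\dim U)
  (ex_intro2 (fun x => x \in U) (fun x => (ad_charpoly br U x)`_(\dim U) != 0) 0 (mem0v U) H0).
have HlowU : forall r', (r' < s)%N -> forall x, x \in U -> (ad_charpoly br U x)`_r' = 0.
  move=> r' r's x xU; apply/eqP; apply/negPn/negP => H.
  by apply: (Hmin _ r's); exists x.
exists s; split; first by split => //; exists x0.
apply/eqP => Hz.
have [r [[_ HrL] Hr]] := Hreg x1 (memvf x1) x1n0.
pose chiQ x := char_poly (drsubmx (matB br (Bc U) x)).
have Fact : forall x, x \in U -> ad_charpoly br fullv x = ad_charpoly br U x * chiQ x.
  move=> x xU; rewrite /ad_charpoly.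
  change (char_poly (matB br (vbasis fullv) x) = char_poly (matB br (vbasis U) x) * chiQ x).
  rewrite -(matB_sim Hbr x (Bc_basis U) (vbasisP fullv)).
  by rewrite (char_poly_block (ur_Bc HU xU)) (ul_Bc HU xU).
move: Hr; rewrite Fact // coefM => Hr.
have [i Hi] : exists i : 'I_r.+1,
    (ad_charpoly br U x1)`_i * (chiQ x1)`_(r - i) != 0.
  apply: NNPP => H; move: Hr; rewrite big1 ?eqxx // => i _.
  by apply/eqP; apply/negPn/negP => Hi; apply: H; exists i.
move: Hi; rewrite mulf_eq0 negb_or => /andP[Hui Hqi].
have si : (s < i)%N.
  have [//|lt|eq] := ltngtP s i.
    by move: Hui; rewrite HlowU ?eqxx.
  by move: Hui; rewrite -eq Hz eqxx.
have ir : (i <= r)%N by rewrite -ltnS ltn_ord.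
pose y := x0 - x1.
pose xt c := c *: y + x1.
have xtU c : xt c \in U by rewrite memvD ?memvZ ?memvB.
have [P HP] := line_poly (ad_mx br U x1) (ad_mx br U y) s.
have [R HR] := line_poly (drsubmx (matB br (Bc U) x1)) (drsubmx (matB br (Bc U) y)) (r - i).
have adlin c : ad_mx br U (xt c) = c *: ad_mx br U y + ad_mx br U x1.
  exact: (matB_lin Hbr (vbasis U) c y x1).
have drlin c : drsubmx (matB br (Bc U) (xt c)) =
    c *: drsubmx (matB br (Bc U) y) + drsubmx (matB br (Bc U) x1).
  by rewrite /xt matB_lin //; apply/matrixP => a b; rewrite !mxE.
have xt1 : xt 1 = x0 by rewrite /xt /y scale1r subrK.
have xt0 : xt 0 = x1 by rewrite /xt scale0r add0r.
have Pn0 : P != 0.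
  apply/eqP => P0; move: Hx0; rewrite -xt1 /ad_charpoly adlin -HP P0 horner0 eqxx.
  by [].
have Rn0 : R != 0.
  apply/eqP => R0; move: Hqi; rewrite -xt0 /chiQ drlin -HR R0 horner0 eqxx.
  by [].
have [c Hc] := poly_nonroot Hinf (mulf_neq0 Pn0 Rn0).
move: Hc; rewrite hornerM mulf_eq0 negb_or => /andP[HPc HRc].
move: HPc HRc; rewrite HP HR -adlin -drlin => HPc HRc.
pose z := xt c.
have [b Hb Hbmin] := ex_minnP (ex_intro (fun b => (chiQ z)`_b != 0) (r - i)%N HRc).
have bri := Hbmin _ HRc.
have Hlowb : forall j, (j < b)%N -> (chiQ z)`_j = 0.
  move=> j jb; apply/eqP; apply/negPn/negP => H.
  by have := Hbmin j H; rewrite leqNgt jb.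
have := HrL (s + b)%N _ z (memvf z).
rewrite Fact ?xtU // (coefM_low (fun j jl => HlowU j jl z (xtU c)) Hlowb) => E.
  have := mulf_neq0 HPc Hb; rewrite E ?eqxx //.
lia.
Qed.
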